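(* For non-zero integers $a,b$ let $f_{a,b}:(0,\infty)\to(0,\infty)$, $f_{a,b}(z)=z^{a/b}$ (real positive branch). Let $I\subseteq(0,\infty)$ have non-empty interior. Then there exist uncountably many $\zeta\in\mathscr{L}\cap(0,\infty)$ such that $f_{a,b}(\zeta)\in\mathscr{L}$ simultaneously for all non-zero integers $a,b$. Moreover, for any fixed non-zero integers $a,b$, there are uncountably many $\zeta\in\mathscr{L}\cap I$ with $f_{a,b}(\zeta)\in\mathscr{L}$.
   Context: $\mathscr{L}$ is the set of Liouville numbers (real irrational $\zeta$ such that for every $\eta>0$ there are infinitely many rationals $y/x$, $x\geq1$, with $|\zeta-y/x|\leq x^{-\eta}$). *)

(* Defs.v *)
From Stdlib Require Import Reals ZArith List.
Open Scope R_scope.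

Definition irrational (z : R) : Prop :=
  ~ exists (p q : Z), q <> 0%Z /\ z = IZR p / IZR q.

Definition infinite_set (S : R -> Prop) : Prop :=
  forall l : list R, exists r, S r /\ ~ In r l.

Definition countable_set (S : R -> Prop) : Prop :=
  exists f : nat -> R, forall z, S z -> exists n, f n = z.

Definition uncountable_set (S : R -> Prop) : Prop := ~ countable_set S.

Definition Liouville (z : R) : Prop :=
  irrational z /\
  forall eta : R, 0 < eta ->
    infinite_set (fun r => exists (x y : Z), (1 <= x)%Z /\ r = IZR y / IZR x /\
                      Rabs (z - IZR y / IZR x) <= Rpower (IZR x) (- eta)).

Definition f_ab (a b : Z) (z : R) : R := Rpower z (IZR a / IZR b).

Definition nonempty_interior (I : R -> Prop) : Prop :=
  exists c r : R, 0 < r /\ forall z, Rabs (z - c) < r -> I z.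

(* Main.v *)
Require Import Defs.
From Stdlib Require Import Reals ZArith List Lra Lia Classical ClassicalEpsilon.
Open Scope R_scope.

Lemma Rpower_pos x e : 0 < Rpower x e.
Proof. unfold Rpower; apply exp_pos. Qed.

Lemma Rpower_le_AB A B c e : 0 < A -> A <= c <= B ->
  Rpower c e <= Rpower A e + Rpower B e.
Proof.
  intros HA Hc.
  destruct (Rle_or_lt 0 e) as [He|He].
  - pose proof (Rle_Rpower_l c B e He ltac:(lra)). pose proof (Rpower_pos A e). lra.
  - replace e with (- (- e)) by ring. set (e' := - e). rewrite !Rpower_Ropp.
    pose proof (Rle_Rpower_l A c e' ltac:(unfold e'; lra) ltac:(lra)).
    pose proof (Rinv_le_contravar _ _ (Rpower_pos A e') H).
    pose proof (Rinv_0_lt_compat _ (Rpower_pos B e')). lra.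
Qed.

Lemma lipschitz A B q x y : 0 < A -> A <= x -> x < y -> y <= B ->
  Rabs (Rpower y q - Rpower x q) <= Rabs q * (Rpower A (q-1) + Rpower B (q-1)) * (y - x).
Proof.
  intros HA Hx Hxy Hy.
  destruct (MVT_cor2 (fun x => Rpower x q) (fun c => q * Rpower c (q-1)) x y Hxy)
    as [c [Hc1 Hc2]].
  { intros c Hc. apply derivable_pt_lim_power. lra. }
  rewrite Hc1, Rabs_mult, Rabs_mult, (Rabs_right (y - x)) by lra.
  apply Rmult_le_compat_r; [lra|]. apply Rmult_le_compat_l; [apply Rabs_pos|].
  rewrite Rabs_right by (left; apply Rpower_pos).
  apply Rpower_le_AB; lra.
Qed.

Lemma Rpower_inj x y q : 0 < x -> 0 < y -> q <> 0 -> Rpower x q = Rpower y q -> x = y.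
Proof.
  intros Hx Hy Hq H. apply ln_inv; auto.
  apply (f_equal ln) in H. rewrite !ln_Rpower in H.
  apply Rmult_eq_reg_l with q; auto.
Qed.

Lemma list_avoid (g : nat -> R) : (forall i j, i <> j -> g i <> g j) ->
  forall l : list R, exists K, forall k, (K <= k)%nat -> ~ In (g k) l.
Proof.
  intros Hg l; induction l as [|a l [K HK]].
  - exists 0%nat; intros k _ [].
  - destruct (classic (exists j, g j = a)) as [[j Hj]|Hn].
    + exists (Nat.max K (S j)); intros k Hk [H|H].
      * subst a. apply (Hg j k); [lia|auto].
      * apply (HK k); [lia|auto].
    + exists K; intros k Hk [H|H].
      * apply Hn; eauto.
      * apply (HK k); auto.
Qed.

Lemma IZR_to_nat z : IZR z <= INR (Z.to_nat z).
Proof.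
  destruct (Z_le_gt_dec 0 z).
  - rewrite INR_IZR_INZ, Z2Nat.id by lia; lra.
  - rewrite INR_IZR_INZ. apply IZR_le. lia.
Qed.

Lemma nat_above (r : R) : exists n : nat, r <= INR n.
Proof.
  exists (Z.to_nat (up r)). pose proof (archimed r). pose proof (IZR_to_nat (up r)). lra.
Qed.

Lemma crit z (y x : nat -> Z) :
 (forall k, (1 <= x k)%Z) ->
 (forall i j, i <> j -> IZR (y i) / IZR (x i) <> IZR (y j) / IZR (x j)) ->
 (forall k, z <> IZR (y k) / IZR (x k)) ->
 (forall n : nat, (1 <= n)%nat -> exists K, forall k, (K <= k)%nat ->
     Rabs (z - IZR (y k) / IZR (x k)) <= / (INR n * IZR (x k) ^ n)) ->
 Liouville z.
Proof.
  intros Hx Hinj Hne Happ. split.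
  - intros [P [Q [HQ HPQ]]].
    destruct (Happ (S (Z.abs_nat Q)) ltac:(lia)) as [K HK].
    specialize (HK K (le_n _)). specialize (Hne K).
    set (X := x K) in *. set (Y := y K) in *.
    assert (HX : 1 <= IZR X) by (apply IZR_le; apply Hx).
    assert (HQ' : 0 < Rabs (IZR Q)) by (apply Rabs_pos_lt; apply not_0_IZR; auto).
    assert (Hint : (P * X - Q * Y <> 0)%Z).
    { intro E. apply Hne. rewrite HPQ. assert (IZR P * IZR X = IZR Q * IZR Y).
      { rewrite <- !mult_IZR. f_equal. lia. }
      apply not_0_IZR in HQ.
      assert (E2 : IZR P / IZR Q = (IZR P * IZR X)/(IZR Q * IZR X)) by (field; split; lra).
      rewrite E2, H. field; split; lra. }
    assert (H1 : 1 <= Rabs (IZR P * IZR X - IZR Q * IZR Y)).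
    { rewrite <- !mult_IZR, <- minus_IZR, Rabs_Zabs. apply IZR_le. lia. }
    assert (Heq : Rabs (z - IZR Y / IZR X) = Rabs (IZR P * IZR X - IZR Q * IZR Y) / (Rabs (IZR Q) * IZR X)).
    { rewrite HPQ. replace (IZR P / IZR Q - IZR Y / IZR X) with
        ((IZR P * IZR X - IZR Q * IZR Y) / (IZR Q * IZR X)).
      2:{ field; split; [lra|]. apply not_0_IZR; auto. }
      unfold Rdiv. rewrite Rabs_mult, Rabs_inv, Rabs_mult, (Rabs_right (IZR X)) by lra. reflexivity. }
    rewrite Heq in HK.
    set (n := S (Z.abs_nat Q)) in *.
    assert (Hn : Rabs (IZR Q) + 1 <= INR n).
    { unfold n. rewrite S_INR, INR_IZR_INZ, Nat2Z.inj_abs_nat, Rabs_Zabs. lra. }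
    assert (HXn : IZR X <= IZR X ^ n).
    { unfold n. rewrite <- tech_pow_Rmult. pose proof (pow_R1_Rle (IZR X) (Z.abs_nat Q) HX). nra. }
    set (D := Rabs (IZR P * IZR X - IZR Q * IZR Y)) in *.
    set (q := Rabs (IZR Q)) in *. set (Xn := IZR X ^ n) in *.
    assert (Hpos : 0 < INR n * Xn) by (apply Rmult_lt_0_compat; lra).
    assert (Hpos2 : 0 < q * IZR X) by (apply Rmult_lt_0_compat; lra).
    unfold Rdiv in HK.
    apply Rmult_le_compat_r with (r := (q * IZR X) * (INR n * Xn)) in HK; [|left; apply Rmult_lt_0_compat; lra].
    replace (D * / (q * IZR X) * (q * IZR X * (INR n * Xn))) with (D * (INR n * Xn)) in HK
      by (field; lra).
    replace (/ (INR n * Xn) * (q * IZR X * (INR n * Xn))) with (q * IZR X) in HK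
      by (field; lra).
    assert (INR n * Xn <= D * (INR n * Xn)) by nra.
    assert (INR n * IZR X <= INR n * Xn) by nra.
    nra.
  - intros eta Heta l.
    destruct (nat_above eta) as [n0 Hn0].
    set (n := S n0).
    assert (Hn : eta <= INR n) by (unfold n; rewrite S_INR; lra).
    destruct (Happ n ltac:(unfold n; lia)) as [K HK].
    destruct (list_avoid (fun k => IZR (y k) / IZR (x k)) Hinj l) as [K2 HK2].
    set (k := Nat.max K K2).
    exists (IZR (y k) / IZR (x k)). split.
    + exists (x k), (y k). split; [apply Hx|]. split; [reflexivity|].
      eapply Rle_trans; [apply HK; unfold k; lia|].
      assert (HX : 1 <= IZR (x k)) by (apply IZR_le; apply Hx).
      eapply Rle_trans with (Rpower (IZR (x k)) (- INR n)).
      * rewrite Rpower_Ropp, Rpower_pow by lra.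
        apply Rinv_le_contravar. { apply pow_lt; lra. }
        rewrite <- (Rmult_1_l (IZR (x k) ^ n)) at 1. apply Rmult_le_compat_r.
        { left; apply pow_lt; lra. }
        unfold n; rewrite S_INR; pose proof (pos_INR n0); lra.
      * apply Rle_Rpower; lra.
    + apply HK2. unfold k; lia.
Qed.

Lemma root_pow A N : 0 < A -> (1 <= N)%nat -> Rpower (Rpower A (/ INR N)) (INR N) = A.
Proof.
  intros HA HN. rewrite Rpower_mult, Rinv_l, Rpower_1; auto.
  apply not_0_INR; lia.
Qed.

Lemma pick A B N : 0 < A < B -> (1 <= N)%nat -> exists p s : nat,
  (1 <= p)%nat /\ (1 <= s)%nat /\ A < (INR p / INR s) ^ N < B.
Proof.
  intros HAB HN.
  assert (HNp : 0 < INR N) by (apply lt_0_INR; lia).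
  assert (HiN : 0 < / INR N) by (apply Rinv_0_lt_compat; auto).
  set (al := Rpower A (/ INR N)). set (be := Rpower B (/ INR N)).
  assert (Hab : al < be) by (apply Rlt_Rpower_l; lra).
  assert (Hal : 0 < al) by apply Rpower_pos.
  destruct (nat_above (/ (be - al))) as [s0 Hs0].
  set (s := S s0).
  assert (Hs : / (be - al) < INR s) by (unfold s; rewrite S_INR; lra).
  assert (Hsp : 0 < INR s) by (unfold s; rewrite S_INR; pose proof (pos_INR s0); lra).
  destruct (archimed (al * INR s)) as [Hu1 Hu2].
  assert (Hup : (0 < up (al * INR s))%Z).
  { apply lt_0_IZR. pose proof (Rmult_lt_0_compat _ _ Hal Hsp). lra. }
  set (p := Z.to_nat (up (al * INR s))).
  assert (Hp : INR p = IZR (up (al * INR s))) by (unfold p; rewrite INR_IZR_INZ, Z2Nat.id by lia; reflexivity).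
  assert (Hp1 : (1 <= p)%nat) by (unfold p; lia).
  exists p, s. split; [auto|]. split; [unfold s; lia|].
  assert (H1 : al < INR p / INR s).
  { apply (Rmult_lt_reg_r (INR s)); auto. unfold Rdiv. rewrite Rmult_assoc, Rinv_l by lra. lra. }
  assert (H2 : INR p / INR s < be).
  { apply (Rmult_lt_reg_r (INR s)); auto. unfold Rdiv. rewrite Rmult_assoc, Rinv_l by lra.
    assert (1 < (be - al) * INR s).
    { apply (Rmult_lt_compat_l (be - al)) in Hs; [|lra]. rewrite Rinv_r in Hs by lra. lra. }
    lra. }
  rewrite <- Rpower_pow by lra.
  rewrite <- (root_pow A N), <- (root_pow B N) by (lra || lia). fold al be.
  split; apply Rlt_Rpower_l; lra.
Qed.

Record St := mkSt { sp : nat; ss : nat; sw : R }.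

Definition F (p s k : nat) : R := / (INR (S k) * INR ((p * s) ^ (fact k * S k))).
Definition Inv (k : nat) (st : St) : Prop :=
  (1 <= sp st)%nat /\ (1 <= ss st)%nat /\ 0 < sw st /\ sw st <= F (sp st) (ss st) k.
Definition rr (k : nat) (st : St) : R := (INR (sp st) / INR (ss st)) ^ fact k.

Lemma F_pos p s k : (1 <= p)%nat -> (1 <= s)%nat -> 0 < F p s k.
Proof.
  intros. unfold F. apply Rinv_0_lt_compat, Rmult_lt_0_compat; apply lt_0_INR; [lia|].
  assert ((p * s) ^ (fact k * S k) <> 0)%nat by (apply Nat.pow_nonzero; lia). lia.
Qed.

Lemma rr_pos k st : Inv k st -> 0 < rr k st.
Proof.
  intros [Hp [Hs _]]. unfold rr. apply pow_lt. apply Rdiv_lt_0_compat; apply lt_0_INR; lia.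
Qed.

Definition StepP (t : R) (k : nat) (st st' : St) : Prop :=
  Inv (S k) st' /\ rr k st < rr (S k) st' /\ rr (S k) st' + sw st' <= rr k st + sw st /\
  (t < rr (S k) st' \/ rr (S k) st' + sw st' < t).

Lemma step_ex t k st : Inv k st -> exists st', StepP t k st st'.
Proof.
  intros HI. pose proof (rr_pos k st HI) as Hr. destruct HI as [Hp [Hs [Hw HF]]].
  set (r := rr k st) in *. set (w := sw st) in *.
  assert (HN : (1 <= fact (S k))%nat) by (pose proof (lt_O_fact (S k)); lia).
  destruct (Rle_or_lt (r + w / 2) t) as [Ht|Ht].
  - destruct (pick r (r + w / 4) (fact (S k)) ltac:(lra) HN) as [p [s [Hp' [Hs' Hin]]]].
    pose proof (F_pos p s (S k) Hp' Hs').
    exists (mkSt p s (Rmin (F p s (S k)) (w / 4))).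
    set (x := (INR p / INR s) ^ fact (S k)) in Hin.
    assert (Ex : rr (S k) (mkSt p s (Rmin (F p s (S k)) (w / 4))) = x) by reflexivity.
    unfold StepP, Inv; cbn [sp ss sw]; rewrite Ex.
    pose proof (Rmin_l (F p s (S k)) (w / 4)). pose proof (Rmin_r (F p s (S k)) (w / 4)).
    assert (0 < Rmin (F p s (S k)) (w / 4)) by (apply Rmin_glb_lt; lra).
    fold r w. split; [repeat split; auto; lra|]. split; [lra|]. split; [lra|]. right; lra.
  - destruct (pick (r + w / 2) (r + 3 * w / 4) (fact (S k)) ltac:(lra) HN) as [p [s [Hp' [Hs' Hin]]]].
    pose proof (F_pos p s (S k) Hp' Hs').
    exists (mkSt p s (Rmin (F p s (S k)) (w / 4))).
    set (x := (INR p / INR s) ^ fact (S k)) in Hin.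
    assert (Ex : rr (S k) (mkSt p s (Rmin (F p s (S k)) (w / 4))) = x) by reflexivity.
    unfold StepP, Inv; cbn [sp ss sw]; rewrite Ex.
    pose proof (Rmin_l (F p s (S k)) (w / 4)). pose proof (Rmin_r (F p s (S k)) (w / 4)).
    assert (0 < Rmin (F p s (S k)) (w / 4)) by (apply Rmin_glb_lt; lra).
    fold r w. split; [repeat split; auto; lra|]. split; [lra|]. split; [lra|]. left; lra.
Qed.

Lemma init_ex A B : 0 < A < B -> exists st, Inv 0 st /\ A < rr 0 st /\ rr 0 st + sw st < B.
Proof.
  intros HAB.
  destruct (pick A ((A + B) / 2) (fact 0) ltac:(lra) ltac:(simpl; lia)) as [p [s [Hp' [Hs' Hin]]]].
  pose proof (F_pos p s 0 Hp' Hs').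
  exists (mkSt p s (Rmin (F p s 0) ((B - A) / 4))).
  set (x := (INR p / INR s) ^ fact 0) in Hin.
  assert (Ex : rr 0 (mkSt p s (Rmin (F p s 0) ((B - A) / 4))) = x) by reflexivity.
  unfold Inv; cbn [sp ss sw]; rewrite Ex.
  pose proof (Rmin_l (F p s 0) ((B - A) / 4)). pose proof (Rmin_r (F p s 0) ((B - A) / 4)).
  assert (0 < Rmin (F p s 0) ((B - A) / 4)) by (apply Rmin_glb_lt; lra).
  repeat split; auto; lra.
Qed.

Lemma step_tot t k st : exists st', Inv k st -> StepP t k st st'.
Proof.
  destruct (classic (Inv k st)) as [H|H].
  - destruct (step_ex t k st H) as [st' Hs]. exists st'; auto.
  - exists st; intro; contradiction.
Qed.

Lemma init_tot A B : exists st, 0 < A < B -> Inv 0 st /\ A < rr 0 st /\ rr 0 st + sw st < B.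
Proof.
  destruct (classic (0 < A < B)) as [H|H].
  - destruct (init_ex A B H) as [st Hs]. exists st; auto.
  - exists (mkSt 1 1 1); intro; contradiction.
Qed.

Definition stepf t k st : St := proj1_sig (constructive_indefinite_description _ (step_tot t k st)).
Definition initf A B : St := proj1_sig (constructive_indefinite_description _ (init_tot A B)).

Fixpoint sq (f : nat -> R) (A B : R) (k : nat) : St :=
  match k with
  | O => initf A B
  | S k' => stepf (f k') k' (sq f A B k')
  end.

Lemma sq_inv f A B : 0 < A < B -> forall k, Inv k (sq f A B k) /\
   StepP (f k) k (sq f A B k) (sq f A B (S k)).
Proof.
  intros HAB. induction k as [|k IH].
  - assert (H0 : Inv 0 (sq f A B 0)).
    { simpl. unfold initf. destruct (constructive_indefinite_description _ _) as [st Hst]; simpl.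
      apply Hst; auto. }
    split; auto. simpl (sq f A B 1). unfold stepf.
    destruct (constructive_indefinite_description _ _) as [st Hst]; simpl. apply Hst; auto.
  - destruct IH as [_ [HI _]]. split; auto.
    change (sq f A B (S (S k))) with (stepf (f (S k)) (S k) (sq f A B (S k))). unfold stepf.
    destruct (constructive_indefinite_description _ _) as [st Hst]; simpl. apply Hst; auto.
Qed.

Lemma div_fact i k : (1 <= i <= k)%nat -> Nat.divide i (fact k).
Proof.
  induction k as [|k IH]; intros Hi; [lia|].
  rewrite fact_simpl. destruct (Nat.eq_dec i (S k)) as [->|Hne].
  - exists (fact k). lia.
  - apply Nat.divide_mul_r. apply IH. lia.
Qed.

Lemma mexact k a b : b <> 0%Z -> (Z.abs_nat b <= k)%nat ->
  (Z.of_nat (fact k) * a = (Z.of_nat (fact k) * a / b) * b)%Z.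
Proof.
  intros Hb Hk. destruct (div_fact (Z.abs_nat b) k ltac:(lia)) as [c Hc].
  assert (Hd : (b | Z.of_nat (fact k) * a)%Z).
  { apply Z.divide_mul_l. apply Z.divide_abs_l. exists (Z.of_nat c).
    rewrite Hc, Nat2Z.inj_mul, Nat2Z.inj_abs_nat. reflexivity. }
  apply Z.mod_divide in Hd; auto. apply Z.div_exact in Hd; auto. lia.
Qed.

Lemma e_bound (N : nat) a b m : b <> 0%Z -> (Z.of_nat N * a = m * b)%Z ->
  (Z.abs_nat m <= N * Z.abs_nat a)%nat.
Proof.
  intros Hb E. apply Nat2Z.inj_le. rewrite Nat2Z.inj_mul, !Nat2Z.inj_abs_nat.
  assert (E2 : (Z.abs m * Z.abs b = Z.of_nat N * Z.abs a)%Z).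
  { rewrite <- Z.abs_mul, <- E, Z.abs_mul, (Z.abs_eq (Z.of_nat N)); lia. }
  assert (1 <= Z.abs b)%Z by lia. pose proof (Z.abs_nonneg m). nia.
Qed.

Lemma rpow_Z x m : 0 < x -> Rpower x (IZR m) =
  if (0 <=? m)%Z then x ^ Z.abs_nat m else / x ^ Z.abs_nat m.
Proof.
  intros Hx. destruct (Z.leb_spec 0 m).
  - rewrite <- Rpower_pow by auto. f_equal. rewrite INR_IZR_INZ, Nat2Z.inj_abs_nat, Z.abs_eq; auto.
  - rewrite <- Rpower_pow by auto. rewrite <- Rpower_Ropp. f_equal.
    rewrite INR_IZR_INZ, Nat2Z.inj_abs_nat, Z.abs_neq by lia. rewrite opp_IZR. ring.
Qed.

Lemma fin_ineq L n K X H : 0 <= L -> 0 < n -> 0 < K -> 0 < X -> 0 < H ->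
  L * n <= K -> X <= H -> L * / (K * H) <= / (n * X).
Proof.
  intros. assert (L * n * X <= K * H) by nra.
  replace (L * / (K * H)) with ((L * n * X) * / (n * X * (K * H))) by (field; lra).
  replace (/ (n * X)) with ((K * H) * / (n * X * (K * H))) by (field; lra).
  apply Rmult_le_compat_r; auto. left; apply Rinv_0_lt_compat.
  apply Rmult_lt_0_compat; apply Rmult_lt_0_compat; auto.
Qed.

Lemma pow_div x y e : y <> 0 -> (x / y) ^ e = x ^ e / y ^ e.
Proof. intros. unfold Rdiv. rewrite Rpow_mult_distr, pow_inv. reflexivity. Qed.

Definition mm (k : nat) (a b : Z) : Z := (Z.of_nat (fact k) * a / b)%Z.
Definition XX (st : St) (k : nat) (a b : Z) : nat :=
  if (0 <=? mm k a b)%Z then ss st ^ Z.abs_nat (mm k a b) else sp st ^ Z.abs_nat (mm k a b).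
Definition YY (st : St) (k : nat) (a b : Z) : nat :=
  if (0 <=? mm k a b)%Z then sp st ^ Z.abs_nat (mm k a b) else ss st ^ Z.abs_nat (mm k a b).

Lemma val st k a b : Inv k st -> b <> 0%Z -> (Z.abs_nat b <= k)%nat ->
  INR (YY st k a b) / INR (XX st k a b) = Rpower (rr k st) (IZR a / IZR b).
Proof.
  intros [Hp [Hs _]] Hb Hk.
  assert (Hp' : 0 < INR (sp st)) by (apply lt_0_INR; lia).
  assert (Hs' : 0 < INR (ss st)) by (apply lt_0_INR; lia).
  assert (Hu : 0 < INR (sp st) / INR (ss st)) by (apply Rdiv_lt_0_compat; auto).
  pose proof (mexact k a b Hb Hk) as E. fold (mm k a b) in E.
  assert (ER : INR (fact k) * (IZR a / IZR b) = IZR (mm k a b)).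
  { apply not_0_IZR in Hb. apply (Rmult_eq_reg_r (IZR b)); auto.
    rewrite <- mult_IZR, <- E, mult_IZR, <- INR_IZR_INZ. field; auto. }
  unfold rr. rewrite <- Rpower_pow by auto. rewrite Rpower_mult, ER, rpow_Z by auto.
  unfold XX, YY. destruct (0 <=? mm k a b)%Z.
  - rewrite !pow_INR, pow_div by lra. reflexivity.
  - rewrite !pow_INR, pow_div by lra. field. split; apply pow_nonzero; lra.
Qed.

Lemma liou (s : nat -> St) z a b :
 (forall k, Inv k (s k)) ->
 (forall i j, (i < j)%nat -> rr i (s i) < rr j (s j)) ->
 (forall k, rr k (s k) < z <= rr k (s k) + sw (s k)) ->
 a <> 0%Z -> b <> 0%Z -> Liouville (f_ab a b z).
Proof.
  intros HI Hinc Hz Ha Hb. unfold f_ab. set (q := IZR a / IZR b).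
  assert (Hq : q <> 0).
  { unfold q. apply not_0_IZR in Ha. apply not_0_IZR in Hb. intro H.
    unfold Rdiv in H. apply Rmult_integral in H. destruct H as [H|H]; auto.
    apply (Rinv_neq_0_compat _ Hb); auto. }
  set (K0 := Z.abs_nat b).
  set (A0 := rr 0 (s 0%nat)). set (B0 := rr 0 (s 0%nat) + sw (s 0%nat)).
  assert (HA0 : 0 < A0) by (apply rr_pos; auto).
  assert (Hge : forall k, A0 <= rr k (s k)).
  { intros [|k]; [unfold A0; lra|]. left; apply Hinc; lia. }
  assert (HzB : z <= B0) by (destruct (Hz 0%nat); unfold B0; lra).
  set (L := Rabs q * (Rpower A0 (q-1) + Rpower B0 (q-1))).
  assert (HL : 0 <= L).
  { unfold L. apply Rmult_le_pos; [apply Rabs_pos|].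
    pose proof (Rpower_pos A0 (q-1)). pose proof (Rpower_pos B0 (q-1)). lra. }
  assert (Hval : forall j, IZR (Z.of_nat (YY (s (j+K0)%nat) (j+K0) a b)) /
       IZR (Z.of_nat (XX (s (j+K0)%nat) (j+K0) a b)) = Rpower (rr (j+K0) (s (j+K0)%nat)) q).
  { intros j. rewrite <- !INR_IZR_INZ. apply val; auto. unfold K0; lia. }
  apply crit with (y := fun j => Z.of_nat (YY (s (j+K0)%nat) (j+K0) a b))
                  (x := fun j => Z.of_nat (XX (s (j+K0)%nat) (j+K0) a b)).
  - intros j. destruct (HI (j + K0)%nat) as [Hp [Hs _]]. unfold XX.
    destruct (0 <=? mm (j + K0) a b)%Z.
    + assert (ss (s (j + K0)%nat) ^ Z.abs_nat (mm (j + K0) a b) <> 0)%nat by (apply Nat.pow_nonzero; lia). lia.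
    + assert (sp (s (j + K0)%nat) ^ Z.abs_nat (mm (j + K0) a b) <> 0)%nat by (apply Nat.pow_nonzero; lia). lia.
  - intros i j Hij. rewrite !Hval. intro E.
    apply Rpower_inj in E; try apply rr_pos; auto.
    destruct (Nat.lt_total i j) as [H|[H|H]]; [|contradiction|].
    + pose proof (Hinc (i + K0)%nat (j + K0)%nat ltac:(lia)). lra.
    + pose proof (Hinc (j + K0)%nat (i + K0)%nat ltac:(lia)). lra.
  - intros k. rewrite Hval. intro E.
    pose proof (rr_pos _ _ (HI (k + K0)%nat)). destruct (Hz (k + K0)%nat).
    apply Rpower_inj in E; auto; lra.
  - intros n Hn. destruct (nat_above (L * INR n)) as [K1 HK1].
    exists (K1 + Z.abs_nat a * n)%nat. intros j Hj. rewrite Hval.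
    set (k := (j + K0)%nat). destruct (Hz k) as [Hz1 Hz2].
    pose proof (lipschitz A0 B0 q (rr k (s k)) z HA0 (Hge k) Hz1 HzB) as HLip. fold L in HLip.
    eapply Rle_trans; [exact HLip|].
    destruct (HI k) as [Hp [Hs [Hw HF]]].
    eapply Rle_trans with (L * F (sp (s k)) (ss (s k)) k).
    { apply Rmult_le_compat_l; lra. }
    unfold F. rewrite <- INR_IZR_INZ, <- pow_INR.
    set (X := XX (s k) k a b). set (p := sp (s k)). set (ss0 := ss (s k)) in *.
    assert (Hkb : (Z.abs_nat b <= k)%nat) by (unfold k, K0; lia).
    pose proof (e_bound (fact k) a b (mm k a b) Hb (mexact k a b Hb Hkb)) as He.
    set (e := Z.abs_nat (mm k a b)) in *.
    assert (HX : (X <= (p * ss0) ^ e)%nat).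
    { unfold X, XX. fold e. destruct (0 <=? mm k a b)%Z; apply Nat.pow_le_mono_l; fold p ss0; nia. }
    assert (HXn : (X ^ n <= (p * ss0) ^ (fact k * S k))%nat).
    { eapply Nat.le_trans. { apply Nat.pow_le_mono_l; exact HX. }
      rewrite <- Nat.pow_mul_r. apply Nat.pow_le_mono_r; [nia|].
      assert (Z.abs_nat a * n <= k)%nat by (unfold k; lia). nia. }
    assert (HX0 : (X ^ n <> 0)%nat).
    { apply Nat.pow_nonzero. unfold X, XX. destruct (0 <=? mm k a b)%Z;
      apply Nat.pow_nonzero; fold p ss0; lia. }
    apply fin_ineq; auto.
    + apply lt_0_INR; lia.
    + apply lt_0_INR; lia.
    + apply lt_0_INR; lia.
    + apply lt_0_INR; lia.
    + eapply Rle_trans; [exact HK1|]. apply le_INR. unfold k. lia.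
    + apply le_INR. exact HXn.
Qed.

Lemma init_prop (f : nat -> R) A B : 0 < A < B ->
  A < rr 0 (sq f A B 0) /\ rr 0 (sq f A B 0) + sw (sq f A B 0) < B.
Proof.
  intros HAB. simpl. unfold initf. destruct (constructive_indefinite_description _ _) as [st Hst]; simpl.
  destruct (Hst HAB) as [_ H]. exact H.
Qed.

Lemma build (f : nat -> R) A B : 0 < A < B -> exists (s : nat -> St) z,
  (forall k, Inv k (s k)) /\ (forall i j, (i < j)%nat -> rr i (s i) < rr j (s j)) /\
  (forall k, rr k (s k) < z <= rr k (s k) + sw (s k)) /\ A < z < B /\ (forall n, z <> f n).
Proof.
  intros HAB. set (s := sq f A B).
  pose proof (sq_inv f A B HAB) as HS. fold s in HS.
  assert (HI : forall k, Inv k (s k)) by (intro k; apply HS).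
  assert (Hw : forall k, 0 < sw (s k)) by (intro k; apply (HI k)).
  assert (Hnest : forall d k, rr k (s k) <= rr (k + d) (s (k + d)%nat) /\
       rr (k + d) (s (k + d)%nat) + sw (s (k + d)%nat) <= rr k (s k) + sw (s k)).
  { induction d as [|d IH]; intros k.
    - rewrite Nat.add_0_r. pose proof (Hw k). lra.
    - rewrite Nat.add_succ_r. destruct (HS (k + d)%nat) as [_ [_ [H1 [H2 _]]]].
      destruct (IH k). lra. }
  assert (Hinc : forall i j, (i < j)%nat -> rr i (s i) < rr j (s j)).
  { intros i j Hij. destruct (HS i) as [_ [_ [H1 _]]].
    destruct (Hnest (j - S i)%nat (S i)) as [H2 _].
    replace (S i + (j - S i))%nat with j in H2 by lia. lra. }
  set (E := fun x => exists k, x = rr k (s k)).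
  destruct (completeness E) as [z [Hub Hlub]].
  { exists (rr 0 (s 0%nat) + sw (s 0%nat)). intros x [k ->].
    destruct (Hnest k 0%nat) as [_ H]. simpl in H. pose proof (Hw k). lra. }
  { exists (rr 0 (s 0%nat)). exists 0%nat. reflexivity. }
  assert (Hge : forall k, rr k (s k) <= z) by (intro k; apply Hub; exists k; reflexivity).
  assert (Hle : forall k, z <= rr k (s k) + sw (s k)).
  { intro k. apply Hlub. intros x [j ->]. destruct (le_lt_dec k j) as [Hkj|Hkj].
    - destruct (Hnest (j - k)%nat k) as [_ H]. replace (k + (j - k))%nat with j in H by lia.
      pose proof (Hw j). lra.
    - pose proof (Hinc j k Hkj). pose proof (Hw k). lra. }
  exists s, z. split; [auto|]. split; [auto|].
  assert (Hz : forall k, rr k (s k) < z <= rr k (s k) + sw (s k)).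
  { intro k. split; [|apply Hle]. pose proof (Hinc k (S k) ltac:(lia)). pose proof (Hge (S k)). lra. }
  split; [auto|]. split.
  - destruct (init_prop f A B HAB) as [H1 H2]. fold s in H1, H2.
    destruct (Hz 0%nat). lra.
  - intros n E0. destruct (HS n) as [_ [_ [_ [_ [H|H]]]]];
      pose proof (Hge (S n)); pose proof (Hle (S n)); lra.
Qed.

Lemma main_lemma A B (f : nat -> R) : 0 < A < B -> exists z, A < z < B /\ (forall n, z <> f n) /\
  forall a b : Z, a <> 0%Z -> b <> 0%Z -> Liouville (f_ab a b z).
Proof.
  intros HAB. destruct (build f A B HAB) as [s [z [HI [Hinc [Hz [HzAB Hf]]]]]].
  exists z. split; [auto|]. split; [auto|]. intros a b Ha Hb. apply (liou s); auto.
Qed.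

Lemma f11 z : 0 < z -> f_ab 1 1 z = z.
Proof. intros. unfold f_ab. replace (IZR 1 / IZR 1) with 1 by (simpl; field). apply Rpower_1; auto. Qed.

Theorem theorem6p1 (I : R -> Prop)
  (HIpos : forall z, I z -> 0 < z)
  (HIint : nonempty_interior I) :
  uncountable_set (fun z => 0 < z /\ Liouville z /\
     forall a b : Z, a <> 0%Z -> b <> 0%Z -> Liouville (f_ab a b z))
  /\
  (forall a b : Z, a <> 0%Z -> b <> 0%Z ->
     uncountable_set (fun z => I z /\ Liouville z /\ Liouville (f_ab a b z))).
Proof.
  split.
  - intros [f Hf]. destruct (main_lemma 1 2 f ltac:(lra)) as [z [Hz [Hn HL]]].
    assert (Hl : Liouville z) by (rewrite <- (f11 z) by lra; apply HL; lia).
    assert (Hz0 : 0 < z) by lra. destruct (Hf z (conj Hz0 (conj Hl HL))) as [n Hfn]. apply (Hn n); auto.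
  - intros a b Ha Hb [f Hf]. destruct HIint as [c [r [Hr Hball]]].
    assert (Hc : 0 < c) by (apply HIpos, Hball; rewrite Rminus_diag, Rabs_R0; auto).
    destruct (main_lemma c (c + r / 2) f ltac:(lra)) as [z [Hz [Hn HL]]].
    assert (Hl : Liouville z) by (rewrite <- (f11 z) by lra; apply HL; lia).
    assert (HIz : I z) by (apply Hball; rewrite Rabs_right by lra; lra).
    destruct (Hf z (conj HIz (conj Hl (HL a b Ha Hb)))) as [n Hfn]. apply (Hn n); auto.
Qed.
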